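(* Let $n\ge 2$ and let $Q_n$ be the $n$-dimensional discrete binary cube. (a) $crx_1(Q_n)=4$. (b) $crx_2(Q_n)=crx_3(Q_n)=2n$. (c) $crx_k(Q_n)=2^n$ for $2^{n-1}\le k\le 2^n$.
   Context: $Q_n$ has vertex set $\{0,1\}^n$, two vectors adjacent iff they differ in exactly one coordinate. An edge-coloured cycle is rainbow if its edges have distinct colours. For a graph $G$ in which any $k$ vertices lie on a common cycle, $crx_k(G)$ is the minimum number of colours in an edge-colouring of $G$ such that every set of $k$ vertices of $G$ lies in some rainbow cycle. *)

(* Defs.v *)
From mathcomp Require Import all_boot.
Set Implicit Arguments. Unset Strict Implicit. Unset Printing Implicit Defensive.

Definition cube (n : nat) := {ffun 'I_n -> bool}.

Definition qadj (n : nat) : rel (cube n) :=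
  fun u v => #|[set i | u i != v i]| == 1.

Definition is_cycle (n : nat) (s : seq (cube n)) : bool :=
  [&& 2 < size s, uniq s & cycle (@qadj n) s].

(* An edge colouring with (at most) m colours: edges {u,v} are represented
   as the sets [set u; v]; values on non-edges are irrelevant. *)
Definition colouring (n m : nat) := {set cube n} -> 'I_m.

Definition rainbow (n m : nat) (c : colouring n m) (s : seq (cube n)) : bool :=
  uniq [seq c [set x; next s x] | x <- s].

Definition k_rainbow_connected (n k m : nat) (c : colouring n m) : Prop :=
  forall S : {set cube n}, #|S| = k ->
    exists s : seq (cube n), [/\ @is_cycle n s, {subset S <= s} & rainbow c s].

Definition is_crx (n k m : nat) : Prop :=
  (exists c : colouring n m, @k_rainbow_connected n k m c) /\
  (forall (m' : nat) (c' : colouring n m'), @k_rainbow_connected n k m' c' -> m <= m').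

(* Main.v *)
Require Import Defs.
From mathcomp Require Import all_boot zify.
Set Implicit Arguments. Unset Strict Implicit. Unset Printing Implicit Defensive.


Definition agree {n} (m : nat) (u v : cube n) : bool :=
  [forall j : 'I_n, (m <= j) ==> (u j == v j)].
Definition flip {n} (u : cube n) (i : 'I_n) : cube n :=
  [ffun j => if j == i then ~~ u i else u j].
Definition colnat {n} (u : cube n) (i : 'I_n) : nat :=
  if nat_of_ord i == 0 then nat_of_bool [exists j : 'I_n, (nat_of_ord j == 1) && u j]
  else (2 * i + odd #|[set j : 'I_n | (j < i) && u j]|).
Definition gS {n} (S : {set cube n}) : nat :=
  match [pick i : 'I_n | [exists u in S, exists v in S, u i != v i]], [pick u in S] with
  | Some i, Some u => colnat u i | _, _ => 0 end.
Definition ediff {n} (u v : cube n) (i : 'I_n) := forall j, (u j != v j) = (j == i).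

Lemma qadj_ediff n (u v : cube n) : qadj u v -> exists i, ediff u v i.
Proof.
rewrite /qadj => /cards1P [i Hi]; exists i => j.
by move/setP: Hi => /(_ j); rewrite !inE.
Qed.

Lemma ediff_qadj n (u v : cube n) i : ediff u v i -> qadj u v.
Proof.
move=> H; rewrite /qadj; apply/cards1P; exists i; apply/setP => j.
by rewrite !inE H.
Qed.

Lemma ediff_sym n (u v : cube n) i : ediff u v i -> ediff v u i.
Proof. by move=> H j; rewrite eq_sym H. Qed.

Lemma ediff_off n (u v : cube n) i j : ediff u v i -> j != i -> u j = v j.
Proof. by move=> H; rewrite -H => /negPn/eqP. Qed.

Lemma colnat_eq n (u v : cube n) i : (forall j, j != i -> u j = v j) -> colnat u i = colnat v i.
Proof.
move=> H; rewrite /colnat; case: ifP => Hi.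
  congr nat_of_bool; apply: eq_existsb => j.
  case: (boolP (nat_of_ord j == 1)) => //= Hj; rewrite H //.
  by apply/negP => /eqP E; by move: Hj; rewrite E (eqP Hi).
congr (_ + odd _); apply: eq_card => j; rewrite !inE.
case: (boolP (j < i)) => //= Hj; rewrite H //.
by apply/negP => /eqP E; move: Hj; rewrite E ltnn.
Qed.

Lemma gS_edge n (u v : cube n) i : ediff u v i -> gS [set u; v] = colnat u i.
Proof.
move=> H; rewrite /gS.
have Hd : forall j, [exists a in [set u; v], exists b in [set u; v], a j != b j] = (j == i).
  move=> j; rewrite -H; apply/existsP/idP.
    case=> a /andP [] /set2P Ha /existsP [b /andP [] /set2P Hb].
    by case: Ha Hb => -> [] ->; rewrite ?eqxx // eq_sym.
  by move=> Huv; exists u; rewrite set21 /=; apply/existsP; exists v; rewrite set22.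
case: pickP => [j Hj | Hn]; last by have := Hn i; rewrite Hd eqxx.
have -> : j = i by apply/eqP; rewrite -Hd.
case: pickP => [w /set2P [] -> // | Hn]; last by have := Hn u; rewrite set21.
apply: colnat_eq => k Hk; rewrite (ediff_off H Hk) //.
Qed.

Lemma colnat_lt n (u : cube n) i : colnat u i < 2 * i.+1.
Proof. rewrite /colnat; case: ifP => _; first by case: [exists _, _]; lia.
by case: odd; lia. Qed.

Lemma colnat_ge n (u : cube n) (i : 'I_n) : 2 * i <= colnat u i.
Proof. rewrite /colnat; case: ifP => [/eqP E|_]; last lia.
by rewrite E. Qed.

Lemma flip_ediff n (u : cube n) i : ediff u (flip u i) i.
Proof. move=> j; rewrite ffunE; case: (eqVneq j i) => [->|H]; first by case: (u i).
by rewrite eqxx. Qed.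

Lemma colnat_par n (a b : cube n) i (m : 'I_n) : ediff a b i -> i < m -> colnat a m != colnat b m.
Proof.
move=> H Him; rewrite /colnat; have -> : (nat_of_ord m == 0) = false by lia.
suff : odd #|[set j : 'I_n | (j < m) && a j]| != odd #|[set j : 'I_n | (j < m) && b j]|.
  by move=> Hodd; rewrite eqn_add2l; move: Hodd; case: (odd _); case: (odd _).
wlog Ha : a b H / a i = false.
  move=> W; case: (boolP (a i)) => Hai; last by apply: W => //; apply/negbTE.
  rewrite eq_sym; apply: W; first exact: ediff_sym.
  by have := H i; rewrite eqxx Hai; case: (b i).
have Hb : b i = true by have := H i; rewrite eqxx Ha; case: (b i).
have -> : [set j : 'I_n | (j < m) && b j] = i |: [set j : 'I_n | (j < m) && a j].
  apply/setP => j; rewrite !inE; case: (eqVneq j i) => [->|Hj]; first by rewrite Hb Him.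
  by rewrite (ediff_off H Hj).
by rewrite cardsU1 inE Ha andbF /=; case: odd.
Qed.

Lemma colnat_low n (u v : cube n) (i : 'I_n) :
  (forall j : 'I_n, j < maxn i.+1 2 -> j != i -> u j = v j) -> colnat u i = colnat v i.
Proof.
move=> H; rewrite /colnat; case: ifP => Hi.
  congr nat_of_bool; apply: eq_existsb => j.
  case: (boolP (nat_of_ord j == 1)) => //= Hj; rewrite H //.
    by move: Hj Hi => /eqP -> /eqP ->.
  by apply/negP => /eqP E; move: Hj; rewrite E (eqP Hi).
congr (_ + odd _); apply: eq_card => j; rewrite !inE.
case: (boolP (j < i)) => //= Hj; rewrite H //.
  by move: Hj; lia.
by apply/negP => /eqP E; move: Hj; rewrite E ltnn.
Qed.

Lemma agreeP n m (x w : cube n) : reflect (forall j : 'I_n, m <= j -> x j = w j) (agree m x w).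
Proof.
apply: (iffP forallP) => H j; first by move=> Hj; apply/eqP; exact: (implyP (H j)).
by apply/implyP => /H ->.
Qed.

Lemma agree_mono n m (x w : cube n) : agree m x w -> agree m.+1 x w.
Proof. by move/agreeP => H; apply/agreeP => j Hj; apply: H; apply: ltnW. Qed.

Lemma agree_trans n m (x y w : cube n) : agree m x y -> agree m y w -> agree m x w.
Proof. by move=> /agreeP H1 /agreeP H2; apply/agreeP => j Hj; rewrite H1 // H2. Qed.

Lemma agree_sym n m (x y : cube n) : agree m x y -> agree m y x.
Proof. by move=> /agreeP H1; apply/agreeP => j Hj; rewrite H1. Qed.

Lemma agree_refl n m (x : cube n) : agree m x x.
Proof. by apply/agreeP. Qed.

Lemma notin_big (l : seq nat) k c : all (fun c => c < k) l -> k <= c -> c \notin l.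
Proof.
move=> /allP H Hc; apply/negP => /H; rewrite ltnNge Hc //.
Qed.

Lemma map_next_zip (T : eqType) (R : Type) (f : T -> T -> R) a l :
  uniq (a :: l) ->
  [seq f w (next (a :: l) w) | w <- a :: l] = [seq f p.1 p.2 | p <- zip (a :: l) (rcons l a)].
Proof.
move=> U; have Hs : size (a :: l) = size (rcons l a) by rewrite size_rcons.
have x0 : R := f a a.
apply: (@eq_from_nth _ x0); first by rewrite !size_map size_zip -Hs minnn.
rewrite size_map => i Hi.
rewrite (nth_map a) // (nth_map (a, a)); last by rewrite size_zip -Hs minnn.
rewrite nth_zip // next_nth mem_nth // index_uniq //=.
rewrite nth_rcons.
case: ifP => // /negbT; rewrite -leqNgt => Hl.
by rewrite if_same [nth a l i]nth_default.
Qed.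

Definition ecol n (s : seq (cube n)) := [seq gS [set w; next s w] | w <- s].

Definition rinv n (m : nat) (x : cube n) (s : seq (cube n)) :=
  [&& is_cycle s, all (agree m x) s, uniq (ecol s) & all (fun c => c < 2 * m) (ecol s)].

Lemma flip_other n (u : cube n) i j : j != i -> flip u i j = u j.
Proof. by move=> H; rewrite ffunE (negbTE H). Qed.

Lemma flip_self n (u : cube n) i : flip u i i = ~~ u i.
Proof. by rewrite ffunE eqxx. Qed.

Lemma aux1 (j mi i : nat) : 1 < mi -> i < mi -> j < maxn i.+1 2 -> j != mi.
Proof. lia. Qed.

Lemma aux2 (a b k : nat) : k <= a -> b < k -> a != b.
Proof. lia. Qed.

Lemma aux3 (b m : nat) : b < 2 * m -> b < 2 * m.+1.
Proof. lia. Qed.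

Lemma reroute_core n (mi : 'I_n) (x zh t : cube n) r :
  1 < mi -> rinv mi x (zh :: t :: r) ->
  rinv mi.+1 x [:: zh, flip zh mi, flip t mi, t & r].
Proof.
move=> Hm /and4P [Hc Ha Hu Hb].
move/and3P: Hc => [Hsz Hu0 Hcy].
move: (Hcy); rewrite /cycle /= => /andP [Hzt Hp].
have [i Hi] := qadj_ediff Hzt.
have Hag : forall w, w \in zh :: t :: r -> w mi = x mi.
  by move=> w /(allP Ha) /agreeP H; rewrite H.
have Him : i < mi.
  rewrite ltnNge; apply/negP => Hle.
  have := Hi i; rewrite eqxx.
  have Htin : t \in zh :: t :: r by rewrite !inE eqxx orbT.
  by move/allP: Ha => Ha; move: (Ha zh (mem_head _ _)) (Ha t Htin)
    => /agreeP /(_ i Hle) <- /agreeP /(_ i Hle) <-; rewrite eqxx.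
have Hmi : mi != i by apply/negP => /eqP E; move: Him; rewrite E ltnn.
set z := flip zh mi; set t' := flip t mi.
have Emi : zh mi = t mi by apply: (ediff_off Hi).
have Hz : z \notin zh :: t :: r.
  by apply/negP => /Hag; rewrite /z flip_self Hag ?mem_head //; case: (x mi).
have Ht' : t' \notin zh :: t :: r.
  by apply/negP => /Hag; rewrite /t' flip_self Hag ?inE ?eqxx ?orbT //; case: (x mi).
have Hzt' : ediff z t' i.
  move=> j; case: (eqVneq j mi) => [->|Hj].
    by rewrite /z /t' !flip_self Emi eqxx (negbTE Hmi).
  rewrite /z /t' (flip_other _ Hj) (flip_other _ Hj); exact: Hi.
have Hzt'n : z != t'.
  by apply/eqP => E; move: (Hzt' i); rewrite E !eqxx.
have Hnu : uniq [:: zh, z, t', t & r].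
  have P : perm_eq [:: zh, z, t', t & r] [:: z, t', zh, t & r].
    by rewrite (perm_catCA [:: zh] [:: z; t'] (t :: r)) perm_refl.
  rewrite (perm_uniq P) cons_uniq in_cons negb_or Hzt'n Hz cons_uniq Ht'.
  exact: Hu0.
have Ecol : colnat z i = colnat zh i.
  apply: colnat_low => j Hj _; rewrite /z flip_other //.
  exact: (aux1 Hm Him Hj).
move: Hu Hb; rewrite /ecol !(map_next_zip (fun a b => gS [set a; b])) //= => Hu Hb.
rewrite (gS_edge Hi) in Hu Hb.
set tl := [seq _ | _ <- zip _ _] in Hu Hb.
have Ecl : ecol [:: zh, z, t', t & r] = [:: colnat zh mi, colnat zh i, colnat t mi & tl].
  rewrite /ecol (map_next_zip (fun a b => gS [set a; b])) //=.
  rewrite (gS_edge (flip_ediff zh mi)) (gS_edge Hzt') Ecol.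
  by rewrite setUC (gS_edge (flip_ediff t mi)).
move: Hu Hb => /andP [Hu1 Hu2] /andP [Hb1 Hb2].
have Hge := colnat_ge zh mi; have Hge2 := colnat_ge t mi.
have Hlt := colnat_lt zh mi; have Hlt2 := colnat_lt t mi.
have Hpar := colnat_par Hi Him.
rewrite /rinv Ecl; apply/and4P; split.
- apply/and3P; split; [by [] | exact: Hnu | ].
  rewrite /cycle /= Hp andbT (ediff_qadj (flip_ediff zh mi)) (ediff_qadj Hzt').
  exact: (ediff_qadj (ediff_sym (flip_ediff t mi))).
- have Hz1 : agree mi.+1 x z.
    apply/agreeP => j Hj; rewrite /z flip_other; last by apply/negP => /eqP E; move: Hj; rewrite E ltnn.
    by move/allP: Ha => /(_ zh (mem_head _ _)) /agreeP ->; last by apply: ltnW.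
  have Ht1 : agree mi.+1 x t'.
    apply/agreeP => j Hj; rewrite /t' flip_other; last by apply/negP => /eqP E; move: Hj; rewrite E ltnn.
    have Htin : t \in zh :: t :: r by rewrite !inE eqxx orbT.
    by move/allP: Ha => /(_ t Htin) /agreeP ->; last by apply: ltnW.
  have Ha1 := sub_all (@agree_mono n mi x) Ha.
  by move: Ha1; rewrite [all _ _]/= => /and3P[A1 A2 A3]; rewrite /= A1 Hz1 Ht1 A2 A3.
- have N1 : colnat zh mi != colnat zh i by apply: aux2 Hge Hb1.
  have N3 : colnat zh i != colnat t mi by rewrite eq_sym; apply: aux2 Hge2 Hb1.
  rewrite cons_uniq !in_cons !negb_or N1 Hpar (notin_big Hb2 Hge) /=.
  by rewrite in_cons negb_or N3 Hu1 (notin_big Hb2 Hge2) Hu2.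
- rewrite [all _ _]/= Hlt Hlt2 (aux3 Hb1).
  by apply: sub_all Hb2 => c /=; apply: aux3.
Qed.

Lemma all_rot' (T : eqType) (a : pred T) k (s : seq T) : all a (rot k s) = all a s.
Proof. by apply/allP/allP => H w Hw; apply: H; rewrite ?mem_rot in Hw *. Qed.

Lemma inv_rot n m (x : cube n) s k : rinv m x s -> rinv m x (rot k s).
Proof.
move=> /and4P [/and3P [Hsz Hu Hc] Ha Hcu Hb].
have Ee : ecol (rot k s) = rot k (ecol s).
  rewrite /ecol -map_rot; apply: eq_map => w; by rewrite next_rot.
by rewrite /rinv /is_cycle size_rot rot_uniq rot_cycle Ee rot_uniq !all_rot' Hsz Hu Hc Ha Hcu Hb.
Qed.

Lemma reroute n (mi : 'I_n) (x zh : cube n) s :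
  1 < mi -> rinv mi x s -> zh \in s ->
  exists s', [/\ rinv mi.+1 x s', {subset s <= s'} & flip zh mi \in s'].
Proof.
move=> Hm Hinv Hzh; case: (rot_to Hzh) => k r Hr.
have Hinv' := inv_rot k Hinv; rewrite Hr in Hinv'.
case: r Hr Hinv' => [|t r] Hr Hinv'.
  by move: Hinv' => /and4P [/and3P [Hsz _ _] _ _ _].
exists [:: zh, flip zh mi, flip t mi, t & r]; split.
- exact: reroute_core.
- move=> w; rewrite -(mem_rot k) Hr !inE.
  by case/orP => [->|/orP [->|->]]; rewrite ?orbT.
- by rewrite !inE eqxx orbT.
Qed.

Definition sb n (x : cube n) (a b : bool) : cube n :=
  [ffun j : 'I_n => if nat_of_ord j == 0 then a else if nat_of_ord j == 1 then b else x j].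

Lemma sb0 n (x : cube n) a b (j : 'I_n) : nat_of_ord j = 0 -> sb x a b j = a.
Proof. by move=> H; rewrite ffunE H. Qed.
Lemma sb1 n (x : cube n) a b (j : 'I_n) : nat_of_ord j = 1 -> sb x a b j = b.
Proof. by move=> H; rewrite ffunE H. Qed.
Lemma sb2 n (x : cube n) a b (j : 'I_n) : 1 < j -> sb x a b j = x j.
Proof. move=> H; rewrite ffunE; have -> : (nat_of_ord j == 0) = false by lia.
by have -> : (nat_of_ord j == 1) = false by lia. Qed.

Lemma sb_ediff0 n (x : cube n) a b (i0 : 'I_n) : nat_of_ord i0 = 0 ->
  ediff (sb x a b) (sb x (~~ a) b) i0.
Proof.
move=> H0 j; rewrite !ffunE; case: (eqVneq j i0) => [->|Hj]; first by rewrite H0 eqxx; case: a.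
have -> : (nat_of_ord j == 0) = false by rewrite -H0; apply/negbTE; exact: Hj.
by case: ifP => _; rewrite eqxx.
Qed.

Lemma sb_ediff1 n (x : cube n) a b (i1 : 'I_n) : nat_of_ord i1 = 1 ->
  ediff (sb x a b) (sb x a (~~ b)) i1.
Proof.
move=> H1 j; rewrite !ffunE; case: (eqVneq j i1) => [->|Hj]; first by rewrite H1 /=; case: b.
have -> : (nat_of_ord j == 1) = false by rewrite -H1; apply/negbTE; exact: Hj.
by case: ifP => _; rewrite eqxx.
Qed.

Lemma sb_col0 n (x : cube n) a b (i0 i1 : 'I_n) : nat_of_ord i0 = 0 -> nat_of_ord i1 = 1 ->
  colnat (sb x a b) i0 = b.
Proof.
move=> H0 H1; rewrite /colnat H0 /=; case: b.
  by have -> : [exists j : 'I_n, (nat_of_ord j == 1) && sb x a true j]; last by [];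
    apply/existsP; exists i1; rewrite H1 eqxx (sb1 _ _ _ H1).
have -> : [exists j : 'I_n, (nat_of_ord j == 1) && sb x a false j] = false; last by [].
by apply/existsP => [[j /andP [/eqP E]]]; rewrite (sb1 _ _ _ E).
Qed.

Lemma sb_col1 n (x : cube n) a b (i0 i1 : 'I_n) : nat_of_ord i0 = 0 -> nat_of_ord i1 = 1 ->
  colnat (sb x a b) i1 = 2 + a.
Proof.
move=> H0 H1; rewrite /colnat H1 /=.
have -> : [set j : 'I_n | (j < 1) && sb x a b j] = if a then [set i0] else set0.
  apply/setP => j; rewrite !inE; case: (boolP (j < 1)) => Hj /=.
    have E : j = i0 by apply: val_inj; rewrite /= H0; lia.
    by rewrite E (sb0 _ _ _ H0); case: a; rewrite ?inE ?eqxx.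
  by case: a; rewrite ?inE //; apply/esym/negbTE/negP => /eqP E; move: Hj; rewrite E H0.
by case: a; rewrite ?cards1 ?cards0.
Qed.

Lemma aux4 (j : nat) : j != 0 -> j != 1 -> 2 <= j.
Proof. lia. Qed.

Lemma base n (x : cube n) : 1 < n -> exists s, rinv 2 x s /\ forall y, agree 2 x y -> y \in s.
Proof.
move=> Hn.
pose i0 : 'I_n := Ordinal (ltnW Hn). pose i1 : 'I_n := Ordinal Hn.
have H0 : nat_of_ord i0 = 0 by []. have H1 : nat_of_ord i1 = 1 by [].
set v00 := sb x false false; set v10 := sb x true false;
set v11 := sb x true true; set v01 := sb x false true.
have E1 : ediff v00 v10 i0 by apply: (sb_ediff0 _ false).
have E2 : ediff v10 v11 i1 by apply: (sb_ediff1 _ true false).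
have E3 : ediff v11 v01 i0 by apply: (sb_ediff0 _ true true).
have E4 : ediff v01 v00 i1 by apply: (sb_ediff1 _ false true).
have Hu : uniq [:: v00; v10; v11; v01].
  apply: (@map_uniq _ _ (fun w : cube n => (w i0, w i1))).
  by rewrite /= /v00 /v10 /v11 /v01 !(sb0 _ _ _ H0) !(sb1 _ _ _ H1).
exists [:: v00; v10; v11; v01]; split.
  apply/and4P; split.
  - rewrite /is_cycle Hu /= (ediff_qadj E1) (ediff_qadj E2) (ediff_qadj E3).
    by rewrite (ediff_qadj E4).
  - by rewrite /= !andbT; apply/and4P; split; apply/agreeP => j Hj; rewrite sb2.
  - rewrite /ecol (map_next_zip (fun a b => gS [set a; b])) //=.
    rewrite (gS_edge E1) (gS_edge E2) (gS_edge E3) (gS_edge E4).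
    by rewrite /v00 /v10 /v11 /v01 !(sb_col0 _ _ _ H0 H1) !(sb_col1 _ _ _ H0 H1).
  - rewrite /ecol (map_next_zip (fun a b => gS [set a; b])) //=.
    rewrite (gS_edge E1) (gS_edge E2) (gS_edge E3) (gS_edge E4).
    by rewrite /v00 /v10 /v11 /v01 !(sb_col0 _ _ _ H0 H1) !(sb_col1 _ _ _ H0 H1).
move=> y /agreeP Hy.
have -> : y = sb x (y i0) (y i1).
  apply/ffunP => j; rewrite ffunE; case: ifP => [/eqP E|/negbT N0].
    by congr (y _); apply: val_inj; rewrite /= E.
  case: ifP => [/eqP E|/negbT N1]; first by congr (y _); apply: val_inj; rewrite /= E.
  by rewrite Hy //; apply: aux4.
by case: (y i0); case: (y i1); rewrite !inE eqxx ?orbT.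
Qed.

Lemma flipK n (u : cube n) i : flip (flip u i) i = u.
Proof. by apply/ffunP => j; rewrite !ffunE; case: (eqVneq j i) => [->|]; rewrite ?eqxx ?negbK. Qed.

Lemma rinv_mono n m (x : cube n) s : rinv m x s -> rinv m.+1 x s.
Proof.
move=> /and4P [Hc Ha Hu Hb]; apply/and4P; split => //.
  by apply: sub_all Ha => w; apply: agree_mono.
by apply: sub_all Hb => c /=; apply: aux3.
Qed.

Lemma rinv_base n m (x y : cube n) s : agree m x y -> rinv m y s -> rinv m x s.
Proof.
move=> Hxy /and4P [Hc Ha Hu Hb]; apply/and4P; split => //.
by apply: sub_all Ha => w; apply: agree_trans.
Qed.

Lemma agree_down n (mi : 'I_n) (x y : cube n) : agree mi.+1 x y -> x mi = y mi -> agree mi x y.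
Proof.
move=> /agreeP H E; apply/agreeP => j; rewrite leq_eqVlt => /orP [/eqP Ej|Hj].
  by have -> : j = mi by apply: val_inj.
exact: H.
Qed.

Definition P3 n (m : nat) := forall x y z : cube n, agree m x y -> agree m x z ->
  exists s, rinv m x s /\ [/\ x \in s, y \in s & z \in s].

Lemma three_step n (mi : 'I_n) (a b c : cube n) : 1 < mi -> P3 n mi ->
  agree mi.+1 a b -> agree mi.+1 a c -> a mi = b mi -> c mi != a mi ->
  exists s, rinv mi.+1 a s /\ [/\ a \in s, b \in s & c \in s].
Proof.
move=> Hm IH Hab Hac Eb Nc.
have Hab' := agree_down Hab Eb.
have Hach : agree mi a (flip c mi).
  apply: agree_down; last by rewrite flip_self; move: Nc; case: (c mi); case: (a mi).
  apply/agreeP => j Hj; rewrite flip_other; first by move/agreeP: Hac; apply.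
  by apply/negP => /eqP E; move: Hj; rewrite E ltnn.
have [s [Hs [Ha Hb Hc]]] := IH a b (flip c mi) Hab' Hach.
have [s' [Hs' Hsub Hc']] := reroute Hm Hs Hc.
exists s'; split => //; split; [exact: Hsub | exact: Hsub | by rewrite flipK in Hc'].
Qed.

Lemma main n m : 2 <= m <= n -> P3 n m.
Proof.
elim: m => [|m IH] Hm //.
have Hn : 1 < n by move: Hm; lia.
case: (eqVneq m 1) => [Em|Nm].
  subst m => x y z Hy Hz.
  have [s [Hs Hmem]] := base x Hn.
  by exists s; split => //; split; apply: Hmem => //; apply: agree_refl.
have Hm' : 2 <= m <= n by move: Hm Nm; lia.
have Hmn : m < n by move: Hm; lia.
pose mi : 'I_n := Ordinal Hmn.
have Hmi : 1 < mi by rewrite /=; move: Hm'; lia.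
have IH' : P3 n mi := IH Hm'.
move=> x y z Hy Hz.
case: (eqVneq (y mi) (x mi)) => Ey; case: (eqVneq (z mi) (x mi)) => Ez.
- have [s [Hs Hmem]] := IH' x y z (@agree_down n mi x y Hy (esym Ey)) (@agree_down n mi x z Hz (esym Ez)).
  by exists s; split => //; apply: rinv_mono.
- exact: (three_step Hmi IH' Hy Hz (esym Ey) Ez).
- have [s [Hs [H1 H2 H3]]] := three_step Hmi IH' Hz Hy (esym Ez) Ey.
  by exists s.
- have Eyz : y mi = z mi by move: Ey Ez; case: (y mi); case: (z mi); case: (x mi).
  have Hyz : agree mi.+1 y z by apply: agree_trans (agree_sym Hy) Hz.
  have Hyx : agree mi.+1 y x by apply: agree_sym.
  have Nx : x mi != y mi by rewrite eq_sym.
  have [s [Hs [H1 H2 H3]]] := three_step Hmi IH' Hyz Hyx Eyz Nx.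
  by exists s; split; [apply: rinv_base Hs|].
Qed.

Lemma path_map_f (T : Type) (e : rel T) (f : T -> T) x s :
  (forall u v, e (f u) (f v) = e u v) -> path e (f x) (map f s) = path e x s.
Proof. move=> H; elim: s x => //= y s IH x; by rewrite H IH. Qed.

Lemma cycle_double (T : Type) (e : rel T) (f : T -> T) a p :
  symmetric e -> (forall u v, e (f u) (f v) = e u v) -> (forall u, e u (f u)) ->
  path e a p -> cycle e (a :: p ++ rev (map f (a :: p))).
Proof.
move=> Hs Hf Hu Hp.
have Er : rev (a :: p) = last a p :: rev (belast a p) by rewrite lastI rev_rcons.
have El : last (last a p) (rev (belast a p)) = a.
  have := congr1 (last a) Er; rewrite /= rev_cons last_rcons => <-.
  by [].
rewrite /cycle rcons_path cat_path Hp -map_rev Er.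
rewrite [map f (_ :: _)]/= [path e _ (_ :: _)]/= Hu path_map_f //.
rewrite last_cat [last _ (_ :: _)]/= last_map El (Hs (f a)) Hu andbT /=.
rewrite rev_path; rewrite (@eq_path _ _ e) //.
Qed.

Lemma qadj_sym n : symmetric (@qadj n).
Proof.
move=> u v; apply/idP/idP => /qadj_ediff [i H]; apply: ediff_qadj (ediff_sym H).
Qed.

Lemma qadj_flip n i (u v : cube n) : qadj (flip u i) (flip v i) = qadj u v.
Proof.
rewrite /qadj; congr (_ == 1); apply: eq_card => j; rewrite !inE !ffunE.
by case: (eqVneq j i) => [->|_] //; case: (u i); case: (v i).
Qed.

Lemma ham n m : 2 <= m <= n -> forall x : cube n, exists s,
  [/\ uniq s, cycle (@qadj n) s, all (agree m x) s & forall w, agree m x w -> w \in s].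
Proof.
elim: m => [|m IH] Hm //.
have Hn : 1 < n by move: Hm; lia.
case: (eqVneq m 1) => [Em|Nm].
  subst m => x.
  have [s [/and4P [/and3P [_ Hu Hc] Ha _ _] Hmem]] := base x Hn.
  by exists s; split.
have Hm' : 2 <= m <= n by move: Hm Nm; lia.
have Hmn : m < n by move: Hm; lia.
pose mi : 'I_n := Ordinal Hmn.
move=> x; have [s [Hu Hc Ha Hmem]] := IH Hm' x.
have Hx : x \in s by apply: Hmem; apply: agree_refl.
case: s Hu Hc Ha Hmem Hx => [|a p] Hu Hc Ha Hmem Hx //.
have Hag : forall w, w \in a :: p -> w mi = x mi.
  by move=> w /(allP Ha) /agreeP H; rewrite H.
exists (a :: p ++ rev (map (flip^~ mi) (a :: p))); split.
- have Finj : injective (fun u : cube n => flip u mi) by move=> u v E; rewrite -(flipK u mi) -(flipK v mi) E.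
  rewrite -cat_cons cat_uniq; apply/and3P; split; [exact: Hu | | by rewrite rev_uniq (map_inj_uniq Finj)].
  apply/hasPn => w; rewrite mem_rev => /mapP [v Hv ->]; apply/negP => /Hag.
  by rewrite flip_self Hag //; case: (x mi).
- apply: cycle_double; [exact: qadj_sym | by move=> u v; apply: qadj_flip |
    by move=> u; apply: (ediff_qadj (flip_ediff u mi)) | ].
  by move: Hc; rewrite /cycle rcons_path => /andP [].
- rewrite -cat_cons all_cat; apply/andP; split.
    by apply: sub_all Ha => w; apply: agree_mono.
  rewrite all_rev all_map; apply/allP => w Hw /=.
  apply/agreeP => j Hj; rewrite flip_other; last by apply/negP => /eqP E; move: Hj; rewrite E ltnn.
  by move/allP: Ha => /(_ w Hw) /agreeP ->; last by apply: ltnW.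
- move=> w Hw; rewrite -cat_cons mem_cat; case: (eqVneq (w mi) (x mi)) => E.
    by rewrite Hmem //; apply: (@agree_down n mi); [| rewrite E].
  apply/orP; right; rewrite mem_rev; apply/mapP; exists (flip w mi); last by rewrite flipK.
  apply: Hmem; apply: (@agree_down n mi).
    apply/agreeP => j Hj; rewrite flip_other; first by move/agreeP: Hw; apply.
    by apply/negP => /eqP E'; move: Hj; rewrite E' ltnn.
  by rewrite flip_self; move: E; case: (w mi); case: (x mi).
Qed.

Definition mkcol n m (H : 0 < m) (g : {set cube n} -> nat) : colouring n m :=
  fun S => Ordinal (ltn_pmod (g S) H).

Lemma rainbow_mk n m (H : 0 < m) g (s : seq (cube n)) :
  uniq [seq g [set x; next s x] | x <- s] ->
  all (fun c => c < m) [seq g [set x; next s x] | x <- s] -> rainbow (mkcol H g) s.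
Proof.
move=> Hu Hb; rewrite /rainbow; apply: (@map_uniq _ _ val); rewrite -map_comp.
rewrite all_map in Hb.
suff -> : [seq (val \o mkcol H g) [set x; next s x] | x <- s] = [seq g [set x; next s x] | x <- s] by [].
apply/eq_in_map => x Hx /=.
by rewrite modn_small //; apply: (allP Hb).
Qed.

Lemma rainbow_size n m (c : colouring n m) s : rainbow c s -> size s <= m.
Proof.
move=> Hr; have := uniq_leq_size Hr (fun x _ => mem_enum _ x).
by rewrite size_map size_enum_ord.
Qed.

Lemma agree_top n (x y : cube n) : agree n x y.
Proof. by apply/agreeP => j Hj; move: (ltn_ord j); rewrite ltnNge Hj. Qed.

Lemma rinv_rainbow n m (H : 0 < 2 * m) (x : cube n) s :
  rinv m x s -> is_cycle s /\ rainbow (mkcol H gS) s.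
Proof. by move=> /and4P [Hc _ Hu Hb]; split => //; apply: rainbow_mk. Qed.

Lemma upper3 n (hn : 2 <= n) (H : 0 < 2 * n) : k_rainbow_connected 3 (mkcol H (@gS n)).
Proof.
move=> S HS; have : size (enum S) = 3 by rewrite -cardE.
case E: (enum S) => [|x [|y [|z [|]]]] // _.
have Hn : 2 <= n <= n by rewrite hn leqnn.
have [s [Hs [Hx Hy Hz]]] := main Hn (agree_top x y) (agree_top x z).
have [Hc Hr] := rinv_rainbow H Hs.
exists s; split => // w; rewrite -mem_enum E !inE.
by case/or3P => /eqP ->.
Qed.

Lemma upper2 n (hn : 2 <= n) (H : 0 < 2 * n) : k_rainbow_connected 2 (mkcol H (@gS n)).
Proof.
move=> S HS; have : size (enum S) = 2 by rewrite -cardE.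
case E: (enum S) => [|x [|y [|]]] // _.
have Hn : 2 <= n <= n by rewrite hn leqnn.
have [s [Hs [Hx Hy _]]] := main Hn (agree_top x y) (agree_top x x).
have [Hc Hr] := rinv_rainbow H Hs.
exists s; split => // w; rewrite -mem_enum E !inE.
by case/orP => /eqP ->.
Qed.

Lemma upper1 n (hn : 2 <= n) (H : 0 < 2 * 2) : k_rainbow_connected 1 (mkcol H (@gS n)).
Proof.
move=> S HS; have : size (enum S) = 1 by rewrite -cardE.
case E: (enum S) => [|x [|]] // _.
have [s [Hs Hmem]] := base x hn.
have [Hc Hr] := rinv_rainbow H Hs.
exists s; split => // w; rewrite -mem_enum E !inE => /eqP ->.
by apply: Hmem; apply: agree_refl.
Qed.

Definition par n (u : cube n) := odd #|[set j | u j]|.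

Lemma qadj_par n (u v : cube n) : qadj u v -> par u != par v.
Proof.
move=> /qadj_ediff [i H]; rewrite /par.
wlog Ha : u v H / u i = false.
  move=> W; case: (boolP (u i)) => Hai; last by apply: W => //; apply/negbTE.
  rewrite eq_sym; apply: W; first exact: ediff_sym.
  by have := H i; rewrite eqxx Hai; case: (v i).
have Hb : v i = true by have := H i; rewrite eqxx Ha; case: (v i).
have -> : [set j | v j] = i |: [set j | u j].
  apply/setP => j; rewrite !inE; case: (eqVneq j i) => [->|Hj]; first by rewrite Hb.
  by rewrite (ediff_off H Hj).
by rewrite cardsU1 inE Ha /=; case: odd.
Qed.

Lemma size4 n (s : seq (cube n)) : is_cycle s -> 3 < size s.
Proof.
move=> /and3P [Hsz _ Hc].
case: s Hsz Hc => [|a [|b [|c [|d r]]]] // _.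
rewrite /cycle /= andbT => /and3P [/qadj_par H1 /qadj_par H2 /qadj_par H3].
by move: H1 H2 H3; case: (par a); case: (par b); case: (par c).
Qed.

Definition x0 n : cube n := [ffun _ => false].

Lemma lower1 n m (c : colouring n m) : k_rainbow_connected 1 c -> 4 <= m.
Proof.
move=> Hk; have [s [Hc _ Hr]] := Hk [set x0 n] (cards1 _).
exact: leq_trans (size4 Hc) (rainbow_size Hr).
Qed.

Definition dist n (u v : cube n) := #|[set j | u j != v j]|.

Lemma dist_sym n (u v : cube n) : dist u v = dist v u.
Proof. by apply: eq_card => j; rewrite !inE eq_sym. Qed.

Lemma dist_tri n (a b c : cube n) : dist a c <= dist a b + dist b c.
Proof.
rewrite /dist; apply: leq_trans (leq_card_setU _ _).
apply: subset_leq_card; apply/subsetP => j; rewrite !inE.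
by case: (a j); case: (b j); case: (c j).
Qed.

Lemma dist_qadj n (u v : cube n) : qadj u v -> dist u v = 1.
Proof. by move/eqP. Qed.

Lemma path_dist n (a : cube n) p : path (@qadj n) a p -> dist a (last a p) <= size p.
Proof.
elim: p a => [|b p IH] a /=.
  by move=> _; rewrite /dist leqn0 cards_eq0; apply/eqP/setP => j; rewrite !inE eqxx.
move=> /andP [Hab Hp]; apply: leq_trans (dist_tri a b _) _.
by rewrite (dist_qadj Hab) add1n ltnS IH.
Qed.

Lemma cycle_dist n (s : seq (cube n)) x y : is_cycle s -> x \in s -> y \in s ->
  2 * dist x y <= size s.
Proof.
move=> /and3P [Hsz Hu Hc] Hx Hy.
case: (eqVneq y x) => [->|Nyx].
  by rewrite /dist (_ : [set j | x j != x j] = set0) ?cards0 //; apply/setP => j; rewrite !inE eqxx.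
case: (rot_to Hx) => k r Hr.
have Hc' : cycle (@qadj n) (x :: r) by rewrite -Hr rot_cycle.
have Hy' : y \in r by move: Hy; rewrite -(mem_rot k) Hr inE (negbTE Nyx).
have Hs : size s = (size r).+1 by rewrite -(size_rot k) Hr.
case/splitPr: Hy' Hs Hc' => p1 p2 Hs Hc'.
move: Hc'; rewrite /cycle rcons_cat cat_path => /andP [Hp1 Hp2].
move: Hp2; rewrite [path _ _ (_ :: _)]/= => /andP [Hly Hp2].
have D1 : dist x y <= size (rcons p1 y).
  by have := path_dist (a := x) (p := rcons p1 y); rewrite last_rcons rcons_path Hp1 Hly; apply.
have D2 : dist y x <= size (rcons p2 x).
  by have := path_dist Hp2; rewrite last_rcons.
rewrite dist_sym in D2; rewrite Hs size_cat /= !size_rcons in D1 D2 *.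
lia.
Qed.

Definition cmp n (x : cube n) : cube n := [ffun j => ~~ x j].

Lemma dist_cmp n (x : cube n) : dist x (cmp x) = n.
Proof.
rewrite /dist (_ : [set j | x j != cmp x j] = setT) ?cardsT ?card_ord //.
by apply/setP => j; rewrite !inE ffunE; case: (x j).
Qed.

Lemma lower2 n m (c : colouring n m) : 0 < n -> k_rainbow_connected 2 c -> 2 * n <= m.
Proof.
move=> Hn Hk.
have Hne : x0 n != cmp (x0 n).
  apply/negP => /eqP E; have := congr1 (fun f : cube n => f (Ordinal Hn)) E.
  by rewrite /= !ffunE.
have HS : #|[set x0 n; cmp (x0 n)]| = 2 by rewrite cards2 Hne.
have [s [Hc Hsub Hr]] := Hk _ HS.
have := cycle_dist Hc (Hsub _ (set21 _ _)) (Hsub _ (set22 _ _)).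
rewrite dist_cmp => H; exact: leq_trans H (rainbow_size Hr).
Qed.

Lemma lower3 n m (c : colouring n m) : 1 < n -> k_rainbow_connected 3 c -> 2 * n <= m.
Proof.
move=> Hn Hk.
pose i0 : 'I_n := Ordinal (ltnW Hn). pose i1 : 'I_n := Ordinal Hn.
set x := x0 n; set cx := cmp x; set y := flip x i0.
have N1 : x != cx.
  by apply/negP => /eqP E; have := congr1 (fun f : cube n => f i0) E; rewrite /= !ffunE.
have N2 : x != y.
  by apply/negP => /eqP E; have := congr1 (fun f : cube n => f i0) E; rewrite /y flip_self /= !ffunE.
have N3 : cx != y.
  apply/negP => /eqP E; have := congr1 (fun f : cube n => f i1) E.
  by rewrite /y flip_other // /= !ffunE.
have HS : #|[set x; cx; y]| = 3.
  by rewrite -setUA cardsU1 cards2 !inE negb_or N1 N2 N3.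
have [s [Hc Hsub Hr]] := Hk _ HS.
have Hx : x \in s by apply: Hsub; rewrite !inE eqxx.
have Hcx : cx \in s by apply: Hsub; rewrite !inE eqxx orbT.
have := cycle_dist Hc Hx Hcx.
rewrite dist_cmp => H; exact: leq_trans H (rainbow_size Hr).
Qed.

Lemma subset_card (T : finType) (A : {set T}) j : j <= #|A| ->
  exists B : {set T}, B \subset A /\ #|B| = j.
Proof.
move=> Hj; exists [set x in take j (enum A)]; split.
  by apply/subsetP => x; rewrite inE => /mem_take; rewrite mem_enum.
rewrite cardsE; move/card_uniqP: (take_uniq j (enum_uniq (mem A))) => ->.
by rewrite size_takel // -cardE.
Qed.

Lemma card_cube n : #|cube n| = 2 ^ n.
Proof. by rewrite card_ffun card_bool card_ord. Qed.

Lemma card_even n (i0 : 'I_n) : #|~: [set u : cube n | par u]| = 2 ^ n.-1.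
Proof.
set P := [set u : cube n | par u].
have Hf : injective (fun u : cube n => flip u i0).
  by move=> u v E; rewrite -(flipK u i0) -(flipK v i0) E.
have Hp : forall u : cube n, par (flip u i0) = ~~ par u.
  by move=> u; have := qadj_par (ediff_qadj (flip_ediff u i0)); case: (par u); case: par.
have L1 : #|~: P| <= #|P|.
  rewrite -(card_imset _ Hf); apply: subset_leq_card; apply/subsetP => v /imsetP [u].
  by rewrite !inE => Hu ->; rewrite Hp.
have L2 : #|P| <= #|~: P|.
  rewrite -(card_imset _ Hf); apply: subset_leq_card; apply/subsetP => v /imsetP [u].
  by rewrite !inE => Hu ->; rewrite Hp Hu.
have := cardsC P; rewrite card_cube.
have -> : 2 ^ n = 2 * 2 ^ n.-1 by rewrite -expnS prednK //; apply: leq_ltn_trans (ltn_ord i0).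
move: L1 L2; lia.
Qed.

Lemma lowerC n m k (c : colouring n m) : 0 < n -> 2 ^ n.-1 <= k <= 2 ^ n ->
  k_rainbow_connected k c -> 2 ^ n <= m.
Proof.
move=> Hn /andP [Hk1 Hk2] Hk.
pose i0 : 'I_n := Ordinal Hn.
set P := [set u : cube n | par u].
have HE := card_even i0; rewrite -/P in HE.
have H2 : 2 ^ n = 2 * 2 ^ n.-1 by rewrite -expnS prednK.
have HP : #|P| = 2 ^ n.-1 by have := cardsC P; rewrite card_cube HE H2; lia.
have Hle : k - 2 ^ n.-1 <= #|P| by rewrite HP; lia.
have [B [HB HBc]] := subset_card Hle.
have HS : #|~: P :|: B| = k.
  rewrite cardsU HE HBc.
  have -> : ~: P :&: B = set0.
    apply/setP => w; rewrite !inE; apply/negP => /andP [Hw Hb].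
    by move/subsetP: HB => /(_ w Hb); rewrite /P inE (negbTE Hw).
  by rewrite cards0 subn0; lia.
have [s [Hc Hsub Hr]] := Hk _ HS.
have Hsz := rainbow_size Hr.
move: (Hc) => /and3P [_ Hu Hcy].
set A := [set w in s].
have HA : #|A| = size s by rewrite cardsE; apply/card_uniqP.
have HID := cardsID P A.
have L1 : #|~: P| <= #|A :\: P|.
  apply: subset_leq_card; apply/subsetP => w Hw; rewrite !inE.
  have Hw2 : ~~ par w by move: Hw; rewrite /P !inE.
  by rewrite Hw2 /=; apply: Hsub; rewrite inE Hw.
have Hinj : injective (next s) := can_inj (prev_next Hu).
have L2 : #|A :\: P| <= #|A :&: P|.
  rewrite -(card_imset _ Hinj); apply: subset_leq_card; apply/subsetP => v /imsetP [w].
  rewrite !inE => /andP [Hw1 Hw2] ->; rewrite mem_next Hw2 /=.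
  have := qadj_par (next_cycle Hcy Hw2); move: Hw1.
  by case: (par w); case: (par _).
move: Hsz HID L1 L2; rewrite HA HE H2; lia.
Qed.

Lemma next2 (T : eqType) (h : seq T) x : uniq h -> 2 < size h -> x \in h ->
  next h x != x /\ next h (next h x) != x.
Proof.
move=> Hu Hsz Hx; case: (rot_to Hx) => k r Hr.
have Hu' : uniq (x :: r) by rewrite -Hr rot_uniq.
have Hs : size h = (size r).+1 by rewrite -(size_rot k) Hr.
rewrite -!(next_rot k Hu) Hr.
case: r Hr Hu' Hs => [|a [|b r]] Hr Hu' Hs; try by rewrite Hs in Hsz.
move: Hu'; rewrite /= !inE !negb_or => /andP [/and3P [Hxa Hxb _] /andP [/andP [Hab _] _]].
have Hax : (a == x) = false by rewrite eq_sym (negbTE Hxa).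
by rewrite /next /= eqxx Hax eqxx; split; rewrite // eq_sym.
Qed.

Lemma upperC n (hn : 1 < n) : exists c : colouring n (2 ^ n), forall k, k_rainbow_connected k c.
Proof.
have Hn : 2 <= n <= n by rewrite hn leqnn.
have [h [Hu Hc Ha Hall]] := ham Hn (x0 n).
have Hin : forall w, w \in h := fun w => Hall w (agree_top _ _).
have Hsz : size h = 2 ^ n.
  rewrite -card_cube -(card_uniqP Hu) -cardsT; apply: eq_card => w; by rewrite in_setT Hin.
have H : 0 < 2 ^ n by rewrite expn_gt0.
have H4 : 2 < size h by rewrite Hsz; apply: leq_trans (_ : 2 ^ 2 <= 2 ^ n); rewrite ?leq_exp2l.
pose g (S : {set cube n}) := match [pick u in S | next h u \in S] with
  | Some u => index u h | None => 0 end.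
have Hg : forall x, x \in h -> g [set x; next h x] = index x h.
  move=> x Hx; rewrite /g; have [N1 N2] := next2 Hu H4 Hx.
  case: pickP => [u /andP [/set2P [->|Eu] Hnu] | Hn0] //.
    move: Hnu; rewrite Eu => /set2P [E|E]; first by rewrite E eqxx in N2.
    have Hinj : injective (next h) := can_inj (prev_next Hu).
    by move: (Hinj _ _ E) => E'; rewrite E' eqxx in N1.
  by have := Hn0 x; rewrite set21 set22.
exists (mkcol H g) => k S HS; exists h; split.
- by rewrite /is_cycle H4 Hu Hc.
- by move=> w _; apply: Hin.
apply: rainbow_mk.
  have -> : [seq g [set x; next h x] | x <- h] = [seq index x h | x <- h].
    by apply/eq_in_map => x Hx; apply: Hg.
  rewrite map_inj_in_uniq // => x y Hx Hy E.
  by rewrite -(nth_index x Hx) -(nth_index x Hy) E.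
rewrite all_map; apply/allP => x Hx /=; rewrite Hg // -Hsz index_mem //.
Qed.

Theorem theorem3p6 (n : nat) (hn : 2 <= n) :
  [/\ is_crx n 1 4,
      is_crx n 2 (2 * n),
      is_crx n 3 (2 * n)
    & forall k : nat, 2 ^ n.-1 <= k <= 2 ^ n -> is_crx n k (2 ^ n)].
Proof.
have H1 : 0 < n by apply: leq_trans hn.
have H2n : 0 < 2 * n by rewrite muln_gt0.
have H4 : 0 < 2 * 2 by [].
split.
- split; first by exists (mkcol H4 (@gS n)); exact: upper1.
  by move=> m c Hk; exact: lower1 Hk.
- split; first by exists (mkcol H2n (@gS n)); exact: upper2.
  by move=> m c Hk; exact: lower2 H1 Hk.
- split; first by exists (mkcol H2n (@gS n)); exact: upper3.
  by move=> m c Hk; exact: lower3 hn Hk.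
- move=> k Hk; split.
    by have [c Hc] := upperC hn; exists c; exact: Hc.
  by move=> m c Hk2; exact: lowerC H1 Hk Hk2.
Qed.
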